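(* A function $a\in C^2([-\pi,\pi])$ satisfies $\int_{-\pi}^\pi a(x)dx=0$ and solves $$\Big(\int_{-\pi}^x a(\bar x)\,d\bar x\Big)a'(x)-a(x)^2+\frac1\pi\int_{-\pi}^\pi a^2(\bar x)\,d\bar x=0\quad\text{for all }x\in[-\pi,\pi]$$ if and only if either $a=\mu\cos(kx)$ for some $\mu\in\mathbb R$ and integer $k\ge1$, or $a=\mu\sin\big(\tfrac{2k+1}{2}x\big)$ for some $\mu\in\mathbb R$ and integer $k\ge0$. *)

(* Defs.v *)
From Stdlib Require Import Reals Lra.
From Coquelicot Require Import Coquelicot.
Open Scope R_scope.

Definition deriv_on_Icc (f f' : R -> R) (lo hi : R) : Prop :=
  forall x, lo <= x <= hi ->
    filterlim (fun y => (f y - f x) / (y - x))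
      (within (fun y => lo <= y <= hi /\ y <> x) (locally x))
      (locally (f' x)).

Definition continuous_on_Icc (f : R -> R) (lo hi : R) : Prop :=
  forall x, lo <= x <= hi ->
    filterlim f (within (fun y => lo <= y <= hi) (locally x)) (locally (f x)).

(* Main.v *)
Require Import Defs.
From Stdlib Require Import Reals Lra Lia ZArith.
From Coquelicot Require Import Coquelicot.
Open Scope R_scope.

Lemma within_ed (D : R -> Prop) f x l :
  filterlim f (within D (locally x)) (locally l) <->
  (forall eps, 0 < eps -> exists delta, 0 < delta /\
     forall y, D y -> Rabs (y - x) < delta -> Rabs (f y - l) < eps).
Proof.
split.
- intros H eps Heps.
  destruct (H (ball l (mkposreal eps Heps)) (locally_ball l _)) as [d Hd].
  exists d; split; [apply cond_pos|].
  intros y Dy Hy. apply (Hd y); [exact Hy| exact Dy].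
- intros H P [eps HP].
  destruct (H eps (cond_pos eps)) as [d [dpos Hd]].
  exists (mkposreal d dpos). intros y Hy Dy. apply HP. apply Hd; [exact Dy| exact Hy].
Qed.

Definition cwf (f : R -> R) l h x :=
  filterlim f (within (fun y => l <= y <= h) (locally x)) (locally (f x)).

Lemma cwf_cont f l h x : continuous f x -> cwf f l h x.
Proof. intro H. unfold cwf. eapply filterlim_filter_le_1; [apply filter_le_within| exact H]. Qed.

Lemma cwf_mult f g l h x : cwf f l h x -> cwf g l h x -> cwf (fun y => f y * g y) l h x.
Proof. intros Hf Hg. exact (filterlim_comp_2 f g Rmult Hf Hg (filterlim_mult (f x) (g x))). Qed.

Lemma cwf_plus f g l h x : cwf f l h x -> cwf g l h x -> cwf (fun y => f y + g y) l h x.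
Proof. intros Hf Hg. exact (filterlim_comp_2 f g Rplus Hf Hg (filterlim_plus (f x) (g x))). Qed.

Lemma cwf_opp f l h x : cwf f l h x -> cwf (fun y => - f y) l h x.
Proof. intros Hf. exact (filterlim_comp _ _ _ f Ropp _ _ _ Hf (filterlim_opp (f x))). Qed.

Lemma cwf_minus f g l h x : cwf f l h x -> cwf g l h x -> cwf (fun y => f y - g y) l h x.
Proof. intros Hf Hg. apply (cwf_plus f (fun y => - g y)); auto. apply cwf_opp; auto. Qed.

Lemma cwf_ext f g l h x : (forall y, l <= y <= h -> f y = g y) -> l <= x <= h -> cwf f l h x -> cwf g l h x.
Proof.
intros E Hx Hf. unfold cwf in *. rewrite within_ed in *. rewrite <- E by auto.
intros eps He. destruct (Hf eps He) as [d [dp Hd]]. exists d; split; auto.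
intros y Dy Hy. rewrite <- E by auto. auto.
Qed.

Lemma deriv_interior f f' l h x : deriv_on_Icc f f' l h -> l < x < h -> derivable_pt_lim f x (f' x).
Proof.
intros H Hx; unfold derivable_pt_lim; intros eps Heps.
destruct (proj1 (within_ed _ _ _ _) (H x (conj (Rlt_le _ _ (proj1 Hx)) (Rlt_le _ _ (proj2 Hx)))) eps Heps) as [d [dp Hd]].
assert (dp' : 0 < Rmin d (Rmin (x - l) (h - x))).
{ apply Rmin_pos; auto. apply Rmin_pos; lra. }
exists (mkposreal _ dp'). simpl. intros h0 H0 Hh0.
assert (Hm1 := Rmin_l d (Rmin (x - l) (h - x))).
assert (Hm2 := Rmin_r d (Rmin (x - l) (h - x))).
assert (Hm3 := Rmin_l (x - l) (h - x)).
assert (Hm4 := Rmin_r (x - l) (h - x)).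
assert (Hy := Hd (x + h0)).
replace (x + h0 - x) with h0 in Hy by ring. apply Hy.
- simpl in Hh0; apply Rabs_def2 in Hh0. split. split; lra. intro E; apply H0; lra.
- simpl in Hh0; apply Rabs_def2 in Hh0. apply Rabs_def1; lra.
Qed.

Lemma deriv_cwf f f' l h x : deriv_on_Icc f f' l h -> l <= x <= h -> cwf f l h x.
Proof.
intros H Hx. unfold cwf. apply within_ed. intros eps Heps.
destruct (proj1 (within_ed _ _ _ _) (H x Hx) 1 Rlt_0_1) as [d [dp Hd]].
assert (Hp : 0 < eps / (Rabs (f' x) + 1)).
{ apply Rdiv_lt_0_compat; auto. assert (0 <= Rabs (f' x)) by apply Rabs_pos. lra. }
exists (Rmin d (eps / (Rabs (f' x) + 1))). split. { apply Rmin_pos; auto. }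
intros y Dy Hy.
destruct (Req_dec y x) as [E|E]. { subst. rewrite Rminus_eq_0, Rabs_R0. auto. }
assert (Hq := Hd y (conj Dy E) (Rlt_le_trans _ _ _ Hy (Rmin_l _ _))).
replace (f y - f x) with ((f y - f x) / (y - x) * (y - x)) by (field; lra).
rewrite Rabs_mult.
assert (Hb : Rabs ((f y - f x) / (y - x)) <= Rabs (f' x) + 1).
{ replace ((f y - f x) / (y - x)) with (((f y - f x) / (y - x) - f' x) + f' x) by ring.
  eapply Rle_trans; [apply Rabs_triang|]. lra. }
assert (Hy2 := Rlt_le_trans _ _ _ Hy (Rmin_r _ _)).
assert (0 < Rabs (y - x)) by (apply Rabs_pos_lt; lra).
apply Rle_lt_trans with ((Rabs (f' x) + 1) * Rabs (y - x)).
{ apply Rmult_le_compat_r; lra. }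
assert (Hpos : 0 < Rabs (f' x) + 1) by (assert (0 <= Rabs (f' x)) by apply Rabs_pos; lra).
apply Rmult_lt_reg_l with (/ (Rabs (f' x) + 1)). { apply Rinv_0_lt_compat; auto. }
rewrite <- Rmult_assoc, Rinv_l by lra. rewrite Rmult_1_l.
unfold Rdiv in Hy2. lra.
Qed.

Lemma near_interior l h x0 d : l < h -> l <= x0 <= h -> 0 < d ->
  exists y, l < y < h /\ Rabs (y - x0) < d.
Proof.
intros Hlh Hx Hd.
set (t := Rmin d (h - l) / 4).
assert (Ht1 : 0 < t) by (unfold t; apply Rdiv_lt_0_compat; [apply Rmin_pos; lra| lra]).
assert (Ht2 : t <= d / 4) by (unfold t, Rdiv; apply Rmult_le_compat_r; [lra| apply Rmin_l]).
assert (Ht3 : t <= (h - l) / 4) by (unfold t, Rdiv; apply Rmult_le_compat_r; [lra| apply Rmin_r]).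
destruct (Rle_dec x0 ((l + h) / 2)).
- exists (x0 + t). split. lra. replace (x0 + t - x0) with t by ring. rewrite Rabs_pos_eq; lra.
- exists (x0 - t). split. lra. replace (x0 - t - x0) with (- t) by ring. rewrite Rabs_Ropp, Rabs_pos_eq; lra.
Qed.

Lemma cwf_const_pt f l h x0 C : l < h -> l <= x0 <= h -> cwf f l h x0 ->
  (forall y, l < y < h -> f y = C) -> f x0 = C.
Proof.
intros Hlh Hx Hc HC.
destruct (Req_dec (f x0) C) as [E|E]; auto. exfalso.
assert (He : 0 < Rabs (f x0 - C)) by (apply Rabs_pos_lt; lra).
destruct (proj1 (within_ed _ _ _ _) Hc _ He) as [d [dp Hd]].
destruct (near_interior l h x0 d Hlh Hx dp) as [y [Hy1 Hy2]].
assert (Hh := Hd y (conj (Rlt_le _ _ (proj1 Hy1)) (Rlt_le _ _ (proj2 Hy1))) Hy2).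
rewrite HC in Hh by auto. rewrite <- Rabs_Ropp in Hh.
replace (- (C - f x0)) with (f x0 - C) in Hh by ring. lra.
Qed.

Lemma cwf_mono f l h : l < h -> cwf f l h l -> cwf f l h h ->
  (forall x y, l < x -> x <= y -> y < h -> f x <= f y) -> f l <= f h.
Proof.
intros Hlh Hcl Hch Hm.
destruct (Rle_dec (f l) (f h)) as [E|E]; auto. exfalso.
assert (He : 0 < (f l - f h) / 2) by lra.
destruct (proj1 (within_ed _ _ _ _) Hcl _ He) as [d1 [dp1 Hd1]].
destruct (proj1 (within_ed _ _ _ _) Hch _ He) as [d2 [dp2 Hd2]].
set (t := Rmin (Rmin d1 d2) (h - l) / 4).
assert (Ht1 : 0 < t) by (unfold t; apply Rdiv_lt_0_compat; [apply Rmin_pos; [apply Rmin_pos|]; lra| lra]).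
assert (Ht2 : t <= Rmin d1 d2 / 4) by (unfold t, Rdiv; apply Rmult_le_compat_r; [lra| apply Rmin_l]).
assert (Ht3 : t <= (h - l) / 4) by (unfold t, Rdiv; apply Rmult_le_compat_r; [lra| apply Rmin_r]).
assert (H1 := Rmin_l d1 d2). assert (H2 := Rmin_r d1 d2).
assert (A1 := Hd1 (l + t)). assert (A2 := Hd2 (h - t)).
replace (l + t - l) with t in A1 by ring. replace (h - t - h) with (- t) in A2 by ring.
rewrite Rabs_Ropp in A2. rewrite Rabs_pos_eq in A1, A2 by lra.
assert (B1 : Rabs (f (l + t) - f l) < (f l - f h) / 2) by (apply A1; lra).
assert (B2 : Rabs (f (h - t) - f h) < (f l - f h) / 2) by (apply A2; lra).
apply Rabs_def2 in B1. apply Rabs_def2 in B2.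
assert (M := Hm (l + t) (h - t) ltac:(lra) ltac:(lra) ltac:(lra)). lra.
Qed.

Lemma mono_open f d p q : (forall y, p < y < q -> derivable_pt_lim f y (d y)) ->
  (forall y, p < y < q -> 0 <= d y) -> forall x y, p < x -> x <= y -> y < q -> f x <= f y.
Proof.
intros Hd Hp x y H1 H2 H3.
destruct (Req_dec x y) as [E|E]. { subst; lra. }
destruct (MVT_cor2 f d x y ltac:(lra)) as [c [Hc1 Hc2]].
{ intros c Hc. apply Hd. lra. }
assert (0 <= d c) by (apply Hp; lra).
assert (0 <= d c * (y - x)) by (apply Rmult_le_pos; lra). lra.
Qed.

Lemma const_open f p q : (forall y, p < y < q -> derivable_pt_lim f y 0) ->
  forall x y, p < x < q -> p < y < q -> f x = f y.
Proof.
intros Hd x y Hx Hy.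
assert (Hd' : forall y, p < y < q -> derivable_pt_lim f y ((fun _ => 0) y)) by auto.
assert (Hd'' : forall y, p < y < q -> derivable_pt_lim (fun t => - f t) y ((fun _ => 0) y)).
{ intros z Hz. replace 0 with (- 0) by ring. apply derivable_pt_lim_opp. auto. }
destruct (Rle_dec x y).
- assert (A := mono_open f _ p q Hd' ltac:(intros; lra) x y ltac:(lra) ltac:(lra) ltac:(lra)).
  assert (B := mono_open _ _ p q Hd'' ltac:(intros; lra) x y ltac:(lra) ltac:(lra) ltac:(lra)).
  simpl in B. lra.
- assert (A := mono_open f _ p q Hd' ltac:(intros; lra) y x ltac:(lra) ltac:(lra) ltac:(lra)).
  assert (B := mono_open _ _ p q Hd'' ltac:(intros; lra) y x ltac:(lra) ltac:(lra) ltac:(lra)).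
  simpl in B. lra.
Qed.

Lemma small_zero u M : 0 <= M -> (forall eps, 0 < eps -> Rabs u <= M * eps) -> u = 0.
Proof.
intros HM H. destruct (Req_dec u 0) as [E|E]; auto. exfalso.
assert (Hu : 0 < Rabs u) by (apply Rabs_pos_lt; auto).
assert (Hp : 0 < Rabs u / (2 * (M + 1))) by (apply Rdiv_lt_0_compat; lra).
assert (A := H _ Hp).
assert (M * (Rabs u / (2 * (M + 1))) < Rabs u).
{ unfold Rdiv. apply Rmult_lt_reg_l with (2 * (M + 1)). lra.
  replace (2 * (M + 1) * (M * (Rabs u * / (2 * (M + 1))))) with (M * Rabs u) by (field; lra).
  nra. }
lra.
Qed.

Lemma side_lim g G x g' G' k : derivable_pt_lim g x g' -> derivable_pt_lim G x G' ->
  g x = 0 -> G x = 0 ->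
  (forall e, 0 < e -> exists h, h <> 0 /\ Rabs h < e /\ g (x + h) = k * G (x + h)) ->
  g' = k * G'.
Proof.
intros Hg HG g0 G0 Hk.
apply Rminus_diag_uniq. apply (small_zero _ (1 + Rabs k)).
{ assert (0 <= Rabs k) by apply Rabs_pos. lra. }
intros eps Heps.
destruct (Hg eps Heps) as [d1 Hd1]. destruct (HG eps Heps) as [d2 Hd2].
destruct (Hk (Rmin d1 d2) (Rmin_pos _ _ (cond_pos d1) (cond_pos d2))) as [h [Hh0 [Hh1 Hh2]]].
assert (A1 := Hd1 h Hh0 (Rlt_le_trans _ _ _ Hh1 (Rmin_l _ _))).
assert (A2 := Hd2 h Hh0 (Rlt_le_trans _ _ _ Hh1 (Rmin_r _ _))).
rewrite g0, Hh2 in A1. rewrite G0 in A2. rewrite Rminus_0_r in A1, A2.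
replace (g' - k * G') with (- (k * G (x + h) / h - g') + k * (G (x + h) / h - G')) by (field; auto).
eapply Rle_trans; [apply Rabs_triang|]. rewrite Rabs_Ropp, Rabs_mult.
assert (0 <= Rabs k) by apply Rabs_pos.
assert (Rabs k * Rabs (G (x + h) / h - G') <= Rabs k * eps) by (apply Rmult_le_compat_l; lra).
unfold Rdiv in *. lra.
Qed.

Lemma locally_ed f x l :
  filterlim f (locally x) (locally l) <->
  (forall eps, 0 < eps -> exists delta, 0 < delta /\
     forall y, Rabs (y - x) < delta -> Rabs (f y - l) < eps).
Proof.
split.
- intros H eps Heps.
  destruct (H (ball l (mkposreal eps Heps)) (locally_ball l _)) as [d Hd].
  exists d; split; [apply cond_pos|].
  intros y Hy. apply (Hd y); exact Hy.
- intros H P [eps HP].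
  destruct (H eps (cond_pos eps)) as [d [dpos Hd]].
  exists (mkposreal d dpos). intros y Hy. apply HP. apply Hd; exact Hy.
Qed.

Definition clamp l h x := Rmin h (Rmax l x).

Lemma clamp_in l h x : l <= h -> l <= clamp l h x <= h.
Proof. intro H. unfold clamp, Rmin, Rmax. repeat destruct Rle_dec; lra. Qed.

Lemma clamp_id l h x : l <= x <= h -> clamp l h x = x.
Proof. intro H. unfold clamp, Rmin, Rmax. repeat destruct Rle_dec; lra. Qed.

Lemma clamp_lip l h x y : l <= h -> Rabs (clamp l h y - clamp l h x) <= Rabs (y - x).
Proof.
intro H. unfold clamp, Rmin, Rmax. unfold Rabs.
repeat destruct Rle_dec; repeat destruct Rcase_abs; lra.
Qed.

Lemma ext_cont f l h : l <= h -> (forall x, l <= x <= h -> cwf f l h x) ->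
  forall x, continuous (fun y => f (clamp l h y)) x.
Proof.
intros Hlh Hc x. unfold continuous. apply locally_ed. intros eps Heps.
destruct (proj1 (within_ed _ _ _ _) (Hc (clamp l h x) (clamp_in l h x Hlh)) eps Heps) as [d [dp Hd]].
exists d; split; auto. intros y Hy. apply Hd. apply clamp_in; auto.
eapply Rle_lt_trans; [apply clamp_lip; auto| exact Hy].
Qed.

Lemma isd_mult f g x df dg : is_derive f x df -> is_derive g x dg ->
  is_derive (fun t => f t * g t) x (df * g x + f x * dg).
Proof. intros Hf Hg. apply (is_derive_mult f g x df dg Hf Hg). intros; apply Rmult_comm. Qed.

Lemma isd_plus f g x df dg : is_derive f x df -> is_derive g x dg ->
  is_derive (fun t => f t + g t) x (df + dg).
Proof. intros Hf Hg. apply (is_derive_plus f g x df dg Hf Hg). Qed.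

Lemma isd_minus f g x df dg : is_derive f x df -> is_derive g x dg ->
  is_derive (fun t => f t - g t) x (df - dg).
Proof. intros Hf Hg. apply (is_derive_minus f g x df dg Hf Hg). Qed.

Lemma isd_eq (f : R -> R) (x l l' : R) : is_derive f x l -> l = l' -> is_derive f x l'.
Proof. intros H E; subst; auto. Qed.

Lemma isd_const (c x : R) : is_derive (fun _ => c) x 0.
Proof. apply is_derive_Reals, derivable_pt_lim_const. Qed.

Lemma isd_id (x : R) : is_derive (fun t => t) x 1.
Proof. apply is_derive_Reals, derivable_pt_lim_id. Qed.

Lemma isd_loc_zero f x l : locally x (fun t => f t = 0) -> is_derive f x l -> l = 0.
Proof.
intros Hl Hd.
assert (H0 : is_derive f x 0).
{ apply is_derive_ext_loc with (fun _ => 0). 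
  - apply filter_imp with (2 := Hl). intros t Ht; auto.
  - apply isd_const. }
apply is_derive_Reals in Hd, H0. exact (uniqueness_limite _ _ _ _ Hd H0).
Qed.

Lemma loc_int l h x : l < x < h -> locally x (fun t => l < t < h).
Proof.
intro Hx. assert (dp : 0 < Rmin (x - l) (h - x)) by (apply Rmin_pos; lra).
exists (mkposreal _ dp). intros y Hy. 
change (Rabs (y - x) < Rmin (x - l) (h - x)) in Hy.
assert (A := Rmin_l (x - l) (h - x)). assert (B := Rmin_r (x - l) (h - x)).
apply Rabs_def2 in Hy. lra.
Qed.

Lemma cont_of_derive (f : R -> R) x l : is_derive f x l -> continuous f x.
Proof. intro H. apply (@ex_derive_continuous R_AbsRing R_NormedModule). exists l. exact H. Qed.

Lemma cont_sq (f : R -> R) x : continuous f x -> continuous (fun t => f t ^ 2) x.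
Proof. intro H. simpl. apply (continuous_mult f (fun t => f t * 1)); auto.
apply (continuous_mult f (fun _ => 1)); auto. apply continuous_const. Qed.

Lemma forward_K (a a1 a2 At : R -> R) (c : R)
  (Ha1 : forall x, -PI < x < PI -> derivable_pt_lim a x (a1 x))
  (Ha2 : forall x, -PI < x < PI -> derivable_pt_lim a1 x (a2 x))
  (HA : forall x, -PI < x < PI -> derivable_pt_lim At x (a x))
  (Hcpos : 0 < c)
  (E : forall x, -PI < x < PI -> At x * a1 x - a x ^ 2 + c = 0) :
  exists lam, forall x, -PI < x < PI -> a1 x = lam * At x.
Proof.
assert (dE : forall x, -PI < x < PI -> At x * a2 x = a x * a1 x).
{ intros x Hx.
  assert (Hd : is_derive (fun t => At t * a1 t - a t * a t + c) x
                 (a x * a1 x + At x * a2 x - (a1 x * a x + a x * a1 x) + 0)).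
  { apply isd_plus; [|apply isd_const]. apply isd_minus; apply isd_mult;
    apply is_derive_Reals; auto. }
  apply isd_loc_zero in Hd.
  - lra.
  - apply filter_imp with (2 := loc_int _ _ _ Hx). intros t Ht.
    rewrite <- (E t Ht). ring. }
assert (Zt : forall x, -PI < x < PI -> At x = 0 -> a x <> 0 /\ a1 x = 0).
{ intros x Hx H0. assert (E0 := E x Hx). rewrite H0 in E0.
  assert (a x <> 0) by (intro H1; rewrite H1 in E0; lra). split; auto.
  assert (D := dE x Hx). rewrite H0 in D.
  rewrite Rmult_0_l in D. symmetry in D. apply Rmult_integral in D as [D|D]; [contradiction | auto]. }
set (K := fun x => if Req_EM_T (At x) 0 then a2 x / a x else a1 x / At x).
assert (K1 : forall x, -PI < x < PI -> At x <> 0 -> is_derive K x 0).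
{ intros x Hx Hnz.
  assert (Hc : continuous At x) by (apply (cont_of_derive _ _ (a x)), is_derive_Reals, HA; auto).
  assert (Hloc : locally x (fun t => At t <> 0)).
  { destruct (proj1 (locally_ed At x (At x)) Hc (Rabs (At x))) as [d [dp Hd]].
    { apply Rabs_pos_lt; auto. }
    exists (mkposreal d dp). intros y Hy. change (Rabs (y - x) < d) in Hy.
    assert (H := Hd y Hy). intro Hy0. rewrite Hy0 in H.
    rewrite Rminus_0_l, Rabs_Ropp in H. lra. }
  apply is_derive_ext_loc with (fun t => a1 t / At t).
  - apply filter_imp with (2 := Hloc). intros t Ht. unfold K.
    destruct (Req_EM_T (At t) 0); [contradiction|auto].
  - apply is_derive_Reals.
    assert (D := derivable_pt_lim_div a1 At x (a2 x) (a x) (Ha2 x Hx) (HA x Hx) Hnz).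
    replace 0 with ((a2 x * At x - a x * a1 x) / (At x)²).
    + exact D.
    + rewrite (Rmult_comm (a2 x)), (dE x Hx). unfold Rdiv. ring. }
assert (K2 : forall x, -PI < x < PI -> At x = 0 -> is_derive K x 0).
{ intros x Hx H0. destruct (Zt x Hx H0) as [anz a10].
  destruct (HA x Hx (Rabs (a x)) ltac:(apply Rabs_pos_lt; auto)) as [d0 Hd0].
  assert (NZ : forall h, h <> 0 -> Rabs h < d0 -> At (x + h) <> 0).
  { intros h Hh Hh2 Hz. assert (B := Hd0 h Hh Hh2). rewrite Hz, H0 in B.
    replace ((0 - 0) / h - a x) with (- a x) in B by (field; auto).
    rewrite Rabs_Ropp in B. lra. }
  set (d := Rmin d0 (Rmin (x + PI) (PI - x))).
  assert (dp : 0 < d) by (apply Rmin_pos; [apply cond_pos| apply Rmin_pos; lra]).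
  assert (Hd1 := Rmin_l d0 (Rmin (x + PI) (PI - x))).
  assert (Hd2 := Rmin_r d0 (Rmin (x + PI) (PI - x))).
  assert (Hd3 := Rmin_l (x + PI) (PI - x)).
  assert (Hd4 := Rmin_r (x + PI) (PI - x)).
  fold d in Hd1, Hd2.
  assert (Side : forall y, 0 < Rabs (y - x) < d -> At y <> 0 /\ -PI < y < PI).
  { intros y [Hy1 Hy2]. split.
    - replace y with (x + (y - x)) by ring. apply NZ. 
      + intro E0. rewrite E0, Rabs_R0 in Hy1. lra.
      + lra.
    - apply Rabs_def2 in Hy2. lra. }
  assert (Kx : K x = a2 x / a x) by (unfold K; destruct (Req_EM_T (At x) 0); [auto| contradiction]).
  assert (SideK : forall p q, (p = x \/ q = x) -> p < q -> q - p <= d ->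
            forall y, p < y < q -> K y = K x).
  { intros p q Hpq Hlt Hlen.
    assert (Kc : forall y z, p < y < q -> p < z < q -> K y = K z).
    { apply const_open. intros y Hy. apply is_derive_Reals. apply K1.
      - apply Side. split; [apply Rabs_pos_lt; lra|]. apply Rabs_def1; lra.
      - apply Side. split; [apply Rabs_pos_lt; lra|]. apply Rabs_def1; lra. }
    set (m := (p + q) / 2).
    assert (Hm : p < m < q) by (unfold m; lra).
    assert (Lin : forall y, p < y < q -> a1 y = K m * At y).
    { intros y Hy. rewrite <- (Kc y m Hy Hm).
      assert (Hs : At y <> 0).
      { apply Side. split; [apply Rabs_pos_lt; lra|]. apply Rabs_def1; lra. }
      unfold K. destruct (Req_EM_T (At y) 0); [contradiction|]. field; auto. }
    assert (Eq : a2 x = K m * a x).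
    { apply (side_lim a1 At x); auto.
      intros e He. destruct Hpq as [Hp|Hq].
      - exists (Rmin e (q - p) / 2). 
        assert (0 < Rmin e (q - p)) by (apply Rmin_pos; lra).
        assert (Rmin e (q - p) <= e) by apply Rmin_l.
        assert (Rmin e (q - p) <= q - p) by apply Rmin_r.
        split; [lra|]. split. { rewrite Rabs_pos_eq; lra. }
        apply Lin. lra.
      - exists (- (Rmin e (q - p) / 2)). 
        assert (0 < Rmin e (q - p)) by (apply Rmin_pos; lra).
        assert (Rmin e (q - p) <= e) by apply Rmin_l.
        assert (Rmin e (q - p) <= q - p) by apply Rmin_r.
        split; [lra|]. split. { rewrite Rabs_Ropp, Rabs_pos_eq; lra. }
        apply Lin. lra. }
    intros y Hy. rewrite (Kc y m Hy Hm), Kx, Eq. field; auto. }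
  apply is_derive_ext_loc with (fun _ => K x); [|apply isd_const].
  exists (mkposreal d dp). intros y Hy. change (Rabs (y - x) < d) in Hy.
  apply Rabs_def2 in Hy.
  destruct (Rtotal_order y x) as [Hlt|[Heq|Hgt]].
  - symmetry. apply (SideK (x - d) x); auto; lra.
  - subst; auto.
  - symmetry. apply (SideK x (x + d)); auto; lra. }
exists (K 0). intros x Hx.
assert (Kc : K x = K 0).
{ apply (const_open K (-PI) PI); auto; [|assert (0 < PI) by apply PI_RGT_0; lra].
  intros y Hy. apply is_derive_Reals. destruct (Req_dec (At y) 0); [apply K2|apply K1]; auto. }
rewrite <- Kc. unfold K. destruct (Req_EM_T (At x) 0) as [H0|H0].
- rewrite H0, Rmult_0_r. apply Zt; auto.
- field; auto.
Qed.

Lemma forward_E (a a1 At : R -> R) (c lam : R)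
  (Ha1 : forall x, -PI < x < PI -> derivable_pt_lim a x (a1 x))
  (Hac : forall x, -PI <= x <= PI -> cwf a (-PI) PI x)
  (HA : forall x, -PI < x < PI -> derivable_pt_lim At x (a x))
  (HAc : forall x, continuous At x)
  (HA0 : At (-PI) = 0) (HApi : At PI = 0)
  (Hs : a (-PI) <> 0) (Hc : c = a (-PI) ^ 2)
  (E : forall x, -PI <= x <= PI -> At x * a1 x - a x ^ 2 + c = 0)
  (Hlin : forall x, -PI < x < PI -> a1 x = lam * At x) :
  exists n : nat, (1 <= n)%nat /\ forall x, -PI <= x <= PI ->
     a x = a (-PI) * cos (INR n / 2 * (x + PI)).
Proof.
assert (HPI := PI_RGT_0).
set (s := a (-PI)) in *.
assert (Hcpos : 0 < c) by (rewrite Hc; apply pow2_gt_0; auto).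
assert (Hlam : lam < 0).
{ destruct (Rlt_dec lam 0) as [L|L]; auto. exfalso.
  set (h := fun y => At y * a y - c * y).
  assert (M : h (-PI) <= h PI).
  { apply cwf_mono; [lra| | |].
    - unfold h. apply cwf_minus; [apply cwf_mult|].
      + apply cwf_cont; auto.
      + apply Hac; lra.
      + apply cwf_cont. apply (cont_of_derive _ _ c). apply is_derive_Reals.
        replace c with (c * 1) at 2 by ring. apply derivable_pt_lim_scal, derivable_pt_lim_id.
    - unfold h. apply cwf_minus; [apply cwf_mult|].
      + apply cwf_cont; auto.
      + apply Hac; lra.
      + apply cwf_cont. apply (cont_of_derive _ _ c). apply is_derive_Reals.
        replace c with (c * 1) at 2 by ring. apply derivable_pt_lim_scal, derivable_pt_lim_id.
    - apply (mono_open h (fun y => a y * a y + At y * a1 y - c * 1)).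
      + intros y Hy. unfold h. apply is_derive_Reals. apply isd_minus.
        * apply isd_mult; apply is_derive_Reals; auto.
        * apply is_derive_Reals. apply derivable_pt_lim_scal, derivable_pt_lim_id.
      + intros y Hy. assert (E1 := E y ltac:(lra)). rewrite Hlin in E1 by auto.
        assert (0 <= lam * (At y * At y)) by (apply Rmult_le_pos; [lra| apply Rle_0_sqr]).
        rewrite Hlin by auto. nra. }
  unfold h in M. rewrite HA0, HApi in M. nra. }
set (w := sqrt (- lam)).
assert (Hw : 0 < w) by (apply sqrt_lt_R0; lra).
assert (Hww : w * w = - lam) by (apply sqrt_sqrt; lra).
set (Yp := fun x => s * cos (w * (x + PI))).
set (Y := fun x => s / w * sin (w * (x + PI))).
set (F := fun x => (a x - Yp x) * (a x - Yp x) + w * w * ((At x - Y x) * (At x - Y x))).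
assert (dYp : forall x, is_derive Yp x (- (s * w * sin (w * (x + PI))))).
{ intro x. unfold Yp. auto_derive; [exact I| ring]. }
assert (dY : forall x, is_derive Y x (Yp x)).
{ intro x. unfold Y, Yp. auto_derive; [exact I| field; lra]. }
assert (dF : forall x, -PI < x < PI -> derivable_pt_lim F x 0).
{ intros x Hx. apply is_derive_Reals. unfold F.
  eapply isd_eq.
  - apply isd_plus; [apply isd_mult; apply isd_minus|].
    + apply is_derive_Reals; apply Ha1; auto.
    + apply dYp.
    + apply is_derive_Reals; apply Ha1; auto.
    + apply dYp.
    + apply is_derive_scal. apply isd_mult; apply isd_minus;
      [apply is_derive_Reals; apply HA; auto| apply dY| apply is_derive_Reals; apply HA; auto| apply dY].
  - rewrite Hlin by auto. unfold Y, Yp. 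
    replace lam with (- (w * w)) by lra. field. lra. }
assert (cF : forall x, -PI <= x <= PI -> cwf F (-PI) PI x).
{ intros x Hx. unfold F.
  assert (cYp : cwf Yp (-PI) PI x) by (apply cwf_cont, (cont_of_derive _ _ _ (dYp x))).
  assert (cY : cwf Y (-PI) PI x) by (apply cwf_cont, (cont_of_derive _ _ _ (dY x))).
  apply cwf_plus; [apply cwf_mult; apply cwf_minus; auto|].
  apply cwf_mult; [apply cwf_cont; apply (cont_of_derive _ _ 0); apply isd_const|].
  apply cwf_mult; apply cwf_minus; auto; apply cwf_cont; auto. }
assert (FC : forall x, -PI < x < PI -> F x = F 0).
{ intros x Hx. apply (const_open F (-PI) PI dF); auto; lra. }
assert (F0 : F (-PI) = 0).
{ unfold F, Yp, Y. rewrite HA0. replace (w * (- PI + PI)) with 0 by ring.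
  rewrite cos_0, sin_0. fold s. ring. }
assert (FC0 : F 0 = 0).
{ assert (F (-PI) = F 0) by (apply (cwf_const_pt F (-PI) PI); [lra|lra|apply cF; lra|exact FC]). lra. }
assert (Fz : forall x, -PI <= x <= PI -> F x = 0).
{ intros x Hx. assert (F x = F 0) by (apply (cwf_const_pt F (-PI) PI); [lra|exact Hx|apply cF; exact Hx|exact FC]). lra. }
assert (Hsq : forall u v, u * u + w * w * (v * v) = 0 -> u = 0 /\ v = 0).
{ intros u v H. assert (0 <= u * u) by apply Rle_0_sqr. assert (0 <= v * v) by apply Rle_0_sqr.
  assert (0 < w * w) by nra. assert (0 <= w * w * (v * v)) by (apply Rmult_le_pos; lra).
  assert (U : u * u = 0) by lra. assert (V : w * w * (v * v) = 0) by lra.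
  split; [destruct (Rmult_integral _ _ U); auto|].
  destruct (Rmult_integral _ _ V) as [V1|V1]; [lra|]. destruct (Rmult_integral _ _ V1); auto. }
assert (AY : At PI = Y PI) by (destruct (Hsq _ _ (Fz PI ltac:(lra))); lra).
rewrite HApi in AY. unfold Y in AY.
assert (S0 : sin (w * (PI + PI)) = 0).
{ symmetry in AY. apply Rmult_integral in AY as [A|A]; auto.
  exfalso. unfold Rdiv in A. apply Rmult_integral in A as [A|A]; auto.
  apply Rinv_neq_0_compat in A; lra. }
apply sin_eq_0_0 in S0. destruct S0 as [n Hn].
assert (Hwn : w = IZR n / 2) by (apply Rmult_eq_reg_r with PI; [|lra]; unfold Rdiv; field_simplify; lra).
assert (npos : (0 < n)%Z) by (apply lt_IZR; lra).
exists (Z.to_nat n). split; [lia|].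
rewrite INR_IZR_INZ, Z2Nat.id by lia. rewrite <- Hwn.
intros x Hx. destruct (Hsq _ _ (Fz x Hx)). unfold Yp in *. lra.
Qed.

Lemma trig_final (a : R -> R) s n : (1 <= n)%nat ->
  (forall x, -PI <= x <= PI -> a x = s * cos (INR n / 2 * (x + PI))) ->
  ((exists (mu : R) (k : nat), (1 <= k)%nat /\
      forall x, - PI <= x <= PI -> a x = mu * cos (INR k * x))
   \/
   (exists (mu : R) (k : nat),
      forall x, - PI <= x <= PI -> a x = mu * sin ((2 * INR k + 1) / 2 * x))).
Proof.
intros Hn Ha. destruct (Nat.Even_or_Odd n) as [[k Hk]|[k Hk]]; subst n.
- left. exists (s * cos (INR k * PI)), k. split; [lia|].
  intros x Hx. rewrite Ha by auto. rewrite mult_INR. replace (INR 2) with 2 by (simpl; ring).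
  replace (2 * INR k / 2 * (x + PI)) with (INR k * x + INR k * PI) by field.
  rewrite cos_plus. rewrite (sin_eq_0_1 (INR k * PI)).
  + ring.
  + exists (Z.of_nat k). rewrite <- INR_IZR_INZ. auto.
- right. exists (- s * sin ((2 * INR k + 1) / 2 * PI)), k.
  intros x Hx. rewrite Ha by auto. rewrite plus_INR, mult_INR. replace (INR 2) with 2 by (simpl; ring). replace (INR 1) with 1 by (simpl; ring).
  replace ((2 * INR k + 1) / 2 * (x + PI)) with ((2 * INR k + 1) / 2 * x + (2 * INR k + 1) / 2 * PI) by field.
  rewrite cos_plus. rewrite (cos_eq_0_1 ((2 * INR k + 1) / 2 * PI)).
  + ring.
  + exists (Z.of_nat k). rewrite <- INR_IZR_INZ. field.
Qed.

Lemma int_zero (g : R -> R) l h : l < h -> (forall x, continuous g x) -> (forall x, 0 <= g x) ->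
  RInt g l h = 0 -> forall x, l < x < h -> g x = 0.
Proof.
intros Hlh Hc Hp HI x Hx.
assert (exR : forall u v, ex_RInt g u v) by (intros; apply (@ex_RInt_continuous R_CompleteNormedModule); intros; apply Hc).
set (G := fun y => RInt g l y).
assert (dG : is_derive G x (g x)).
{ apply (is_derive_RInt g G l x); [|apply Hc].
  apply filter_forall. intro b. apply (@RInt_correct R_CompleteNormedModule), exR. }
assert (Mono : forall u v, u <= v -> G u <= G v).
{ intros u v Huv. unfold G. rewrite <- (RInt_Chasles g l u v) by apply exR.
  assert (0 <= RInt g u v) by (apply RInt_ge_0; auto). change (plus ?x ?y) with (x + y). lra. }
assert (Gl : G l = 0) by (unfold G; apply (@RInt_point R_CompleteNormedModule)).
assert (Gz : forall y, l <= y <= h -> G y = 0).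
{ intros y Hy. assert (A := Mono l y (proj1 Hy)). assert (B := Mono y h (proj2 Hy)).
  change (G h) with (RInt g l h) in B. lra. }
apply (isd_loc_zero G x (g x)); auto.
apply filter_imp with (2 := loc_int _ _ _ Hx). intros t Ht. apply Gz. lra.
Qed.

Lemma forward (a a1 a2 : R -> R)
  (Ha1 : deriv_on_Icc a a1 (- PI) PI)
  (Ha2 : deriv_on_Icc a1 a2 (- PI) PI) :
  (RInt a (- PI) PI = 0 /\
   forall x, - PI <= x <= PI ->
     RInt a (- PI) x * a1 x - (a x) ^ 2
       + / PI * RInt (fun t => (a t) ^ 2) (- PI) PI = 0) ->
  ((exists (mu : R) (k : nat), (1 <= k)%nat /\
      forall x, - PI <= x <= PI -> a x = mu * cos (INR k * x))
   \/
   (exists (mu : R) (k : nat),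
      forall x, - PI <= x <= PI -> a x = mu * sin ((2 * INR k + 1) / 2 * x))).
Proof.
intros [HI HE].
assert (HPI := PI_RGT_0).
assert (cwa : forall x, -PI <= x <= PI -> cwf a (-PI) PI x) by (intros; apply (deriv_cwf a a1); auto).
set (at_ := fun x => a (clamp (-PI) PI x)).
assert (cat : forall x, continuous at_ x) by (apply ext_cont; auto; lra).
assert (exR : forall u v, ex_RInt at_ u v) by (intros; apply (@ex_RInt_continuous R_CompleteNormedModule); intros; apply cat).
assert (atE : forall x, -PI <= x <= PI -> at_ x = a x) by (intros; unfold at_; rewrite clamp_id; auto).
set (At := fun x => RInt at_ (-PI) x).
assert (dAt : forall x, is_derive At x (at_ x)).
{ intro x. apply (is_derive_RInt at_ At (-PI) x); [|apply cat].
  apply filter_forall. intro b. apply (@RInt_correct R_CompleteNormedModule), exR. }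
assert (AtEq : forall x, -PI <= x <= PI -> RInt a (-PI) x = At x).
{ intros x Hx. unfold At. apply RInt_ext. intros t Ht. rewrite atE; auto.
  assert (Rmin (-PI) x = -PI) by (apply Rmin_left; lra).
  assert (Rmax (-PI) x = x) by (apply Rmax_right; lra). lra. }
set (c := / PI * RInt (fun t => (a t) ^ 2) (- PI) PI) in HE.
assert (E : forall x, -PI <= x <= PI -> At x * a1 x - a x ^ 2 + c = 0).
{ intros x Hx. rewrite <- AtEq by auto. auto. }
assert (HA0 : At (-PI) = 0) by (unfold At; apply (@RInt_point R_CompleteNormedModule)).
assert (HApi : At PI = 0) by (rewrite <- AtEq by lra; auto).
assert (HA : forall x, -PI < x < PI -> derivable_pt_lim At x (a x)).
{ intros x Hx. rewrite <- atE by lra. apply is_derive_Reals, dAt. }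
assert (HAc : forall x, continuous At x) by (intro x; apply (cont_of_derive _ _ _ (dAt x))).
assert (Hc : c = a (-PI) ^ 2).
{ assert (E0 := E (-PI) ltac:(lra)). rewrite HA0 in E0. lra. }
destruct (Req_dec (a (-PI)) 0) as [Z|NZ].
- left. exists 0, 1%nat. split; [lia|].
  assert (c0 : RInt (fun t => at_ t ^ 2) (-PI) PI = 0).
  { assert (c = 0) by (rewrite Hc, Z; ring).
    unfold c in H. apply Rmult_integral in H as [H|H].
    - apply Rinv_neq_0_compat in H; lra.
    - rewrite <- H. apply RInt_ext. intros t Ht. rewrite atE; auto.
      rewrite Rmin_left in Ht by lra. rewrite Rmax_right in Ht by lra. lra. }
  assert (Zi : forall x, -PI < x < PI -> a x = 0).
  { intros x Hx. rewrite <- atE by lra.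
    assert (at_ x ^ 2 = 0).
    { apply (int_zero (fun t => at_ t ^ 2) (-PI) PI); auto; [lra| |].
      - intro y. apply cont_sq. apply cat.
      - intro y. apply pow2_ge_0. }
    simpl in H. rewrite Rmult_1_r in H. destruct (Rmult_integral _ _ H); auto. }
  intros x Hx. rewrite Rmult_0_l. apply (cwf_const_pt a (-PI) PI); auto. lra.
- assert (Hcpos : 0 < c) by (rewrite Hc; apply pow2_gt_0; auto).
  destruct (forward_K a a1 a2 At c) as [lam Hlam]; auto.
  + intros x Hx. apply (deriv_interior a a1 (-PI) PI); auto.
  + intros x Hx. apply (deriv_interior a1 a2 (-PI) PI); auto.
  + intros x Hx. apply E. lra.
  + destruct (forward_E a a1 At c lam) as [n [Hn Ha]]; auto.
    * intros x Hx. apply (deriv_interior a a1 (-PI) PI); auto.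
    * apply (trig_final a (a (-PI)) n); auto.
Qed.

Lemma backward_gen (a a1 a2 f f1 F : R -> R) (C : R)
  (Ha1 : deriv_on_Icc a a1 (- PI) PI)
  (Ha2 : deriv_on_Icc a1 a2 (- PI) PI)
  (Hf : forall x, -PI <= x <= PI -> a x = f x)
  (dF : forall x, is_derive F x (f x))
  (df : forall x, is_derive f x (f1 x))
  (cf1 : forall x, continuous f1 x)
  (F0 : F (-PI) = 0) (F1 : F PI = 0)
  (HC : RInt (fun t => f t ^ 2) (-PI) PI = C)
  (Id : forall x, F x * f1 x - f x ^ 2 + / PI * C = 0) :
  (RInt a (- PI) PI = 0 /\
   forall x, - PI <= x <= PI ->
     RInt a (- PI) x * a1 x - (a x) ^ 2
       + / PI * RInt (fun t => (a t) ^ 2) (- PI) PI = 0).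
Proof.
assert (HPI := PI_RGT_0).
assert (cf : forall x, continuous f x) by (intro x; apply (cont_of_derive _ _ _ (df x))).
assert (IA : forall x, -PI <= x <= PI -> RInt a (-PI) x = F x).
{ intros x Hx. rewrite (RInt_ext a f).
  - rewrite (is_RInt_unique f (-PI) x (minus (F x) (F (-PI)))).
    + rewrite F0. unfold minus, plus, opp, zero; simpl; ring.
    + apply (@is_RInt_derive R_CompleteNormedModule). 
      * intros t _. apply dF.
      * intros t _. apply cf.
  - intros t Ht. apply Hf. rewrite Rmin_left in Ht by lra. rewrite Rmax_right in Ht by lra. lra. }
assert (I2 : RInt (fun t => a t ^ 2) (-PI) PI = C).
{ rewrite <- HC. apply RInt_ext. intros t Ht. rewrite Hf; auto.
  rewrite Rmin_left in Ht by lra. rewrite Rmax_right in Ht by lra. lra. }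
assert (A1i : forall x, -PI < x < PI -> a1 x = f1 x).
{ intros x Hx. apply (uniqueness_limite a x).
  - apply (deriv_interior a a1 (-PI) PI); auto.
  - apply is_derive_Reals. apply is_derive_ext_loc with f; [|apply df].
    apply filter_imp with (2 := loc_int _ _ _ Hx). intros t Ht. symmetry. apply Hf. lra. }
assert (A1 : forall x, -PI <= x <= PI -> a1 x = f1 x).
{ intros x Hx.
  assert (a1 x - f1 x = 0); [|lra].
  apply (cwf_const_pt (fun y => a1 y - f1 y) (-PI) PI x 0); [lra|auto| |].
  - apply cwf_minus; [apply (deriv_cwf a1 a2); auto| apply cwf_cont; auto].
  - intros y Hy. rewrite A1i; auto. ring. }
split.
- rewrite IA by lra. auto.
- intros x Hx. rewrite IA, I2, A1, Hf by auto. apply Id.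
Qed.

Lemma backward_cos (a a1 a2 : R -> R) mu k
  (Ha1 : deriv_on_Icc a a1 (- PI) PI)
  (Ha2 : deriv_on_Icc a1 a2 (- PI) PI) (Hk : (1 <= k)%nat)
  (Hf : forall x, -PI <= x <= PI -> a x = mu * cos (INR k * x)) :
  (RInt a (- PI) PI = 0 /\
   forall x, - PI <= x <= PI ->
     RInt a (- PI) x * a1 x - (a x) ^ 2
       + / PI * RInt (fun t => (a t) ^ 2) (- PI) PI = 0).
Proof.
assert (HPI := PI_RGT_0).
assert (Hk0 : 0 < INR k) by (apply lt_0_INR; lia).
assert (S : sin (INR k * PI) = 0).
{ apply sin_eq_0_1. exists (Z.of_nat k). rewrite <- INR_IZR_INZ. auto. }
assert (S2 : sin (2 * INR k * PI) = 0).
{ apply sin_eq_0_1. exists (Z.of_nat (2 * k)). rewrite <- INR_IZR_INZ, mult_INR. simpl (INR 2). ring. }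
apply (backward_gen a a1 a2 (fun x => mu * cos (INR k * x)) (fun x => - (mu * INR k * sin (INR k * x)))
         (fun x => mu * sin (INR k * x) / INR k) (mu * mu * PI)); auto.
- intro x. auto_derive; [exact I| field; lra].
- intro x. auto_derive; [exact I| ring].
- intro x. apply (cont_of_derive _ _ (- (mu * INR k * (INR k * cos (INR k * x))))). auto_derive; [exact I| ring].
- simpl. replace (INR k * - PI) with (- (INR k * PI)) by ring. rewrite sin_neg, S. field. lra.
- simpl. rewrite S. field. lra.
- set (G := fun x => mu * mu * (x / 2 + sin (2 * INR k * x) / (4 * INR k))).
  assert (R : is_RInt (fun t => (mu * cos (INR k * t)) ^ 2) (-PI) PI (minus (G PI) (G (-PI)))).
  { apply (@is_RInt_derive R_CompleteNormedModule).
    * intros x _. unfold G. auto_derive; [exact I|]. 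
      replace (2 * INR k * x) with (2 * (INR k * x)) by ring. rewrite cos_2a_cos. field. lra.
    * intros x _. apply (cont_of_derive _ _ (2 * (mu * cos (INR k * x)) * (mu * (- INR k * sin (INR k * x))))). 
      auto_derive; [exact I| ring]. }
  rewrite (is_RInt_unique _ _ _ _ R). unfold G. unfold minus, plus, opp; simpl.
  replace (2 * INR k * - PI) with (- (2 * INR k * PI)) by ring.
  rewrite sin_neg, S2. field. lra.
- intro x. assert (T := sin2_cos2 (INR k * x)). unfold Rsqr in T.
  set (s := sin (INR k * x)) in *. set (c := cos (INR k * x)) in *.
  transitivity (mu * mu * (1 - (s * s + c * c))); [field; lra| rewrite T; ring].
Qed.

Lemma backward_sin (a a1 a2 : R -> R) mu k
  (Ha1 : deriv_on_Icc a a1 (- PI) PI)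
  (Ha2 : deriv_on_Icc a1 a2 (- PI) PI)
  (Hf : forall x, -PI <= x <= PI -> a x = mu * sin ((2 * INR k + 1) / 2 * x)) :
  (RInt a (- PI) PI = 0 /\
   forall x, - PI <= x <= PI ->
     RInt a (- PI) x * a1 x - (a x) ^ 2
       + / PI * RInt (fun t => (a t) ^ 2) (- PI) PI = 0).
Proof.
assert (HPI := PI_RGT_0).
set (m := (2 * INR k + 1) / 2) in *.
assert (Hm : 0 < m) by (unfold m; assert (0 <= INR k) by apply pos_INR; lra).
assert (Cm : cos (m * PI) = 0).
{ apply cos_eq_0_1. exists (Z.of_nat k). rewrite <- INR_IZR_INZ. unfold m. field. }
assert (S2 : sin (2 * m * PI) = 0).
{ apply sin_eq_0_1. exists (Z.of_nat (2 * k + 1)). rewrite <- INR_IZR_INZ, plus_INR, mult_INR.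
  unfold m. simpl (INR 2). simpl (INR 1). field. }
apply (backward_gen a a1 a2 (fun x => mu * sin (m * x)) (fun x => mu * m * cos (m * x))
         (fun x => - (mu * cos (m * x)) / m) (mu * mu * PI)); auto.
- intro x. auto_derive; [exact I| field; lra].
- intro x. auto_derive; [exact I| ring].
- intro x. apply (cont_of_derive _ _ (mu * m * (- (m * sin (m * x))))). auto_derive; [exact I| ring].
- simpl. replace (m * - PI) with (- (m * PI)) by ring. rewrite cos_neg, Cm. field. lra.
- simpl. rewrite Cm. field. lra.
- set (G := fun x => mu * mu * (x / 2 - sin (2 * m * x) / (4 * m))).
  assert (R : is_RInt (fun t => (mu * sin (m * t)) ^ 2) (-PI) PI (minus (G PI) (G (-PI)))).
  { apply (@is_RInt_derive R_CompleteNormedModule).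
    * intros x _. unfold G. auto_derive; [exact I|]. 
      replace (2 * m * x) with (2 * (m * x)) by ring. rewrite cos_2a_sin. field. lra.
    * intros x _. apply (cont_of_derive _ _ (2 * (mu * sin (m * x)) * (mu * (m * cos (m * x))))). 
      auto_derive; [exact I| ring]. }
  rewrite (is_RInt_unique _ _ _ _ R). unfold G. unfold minus, plus, opp; simpl.
  replace (2 * m * - PI) with (- (2 * m * PI)) by ring.
  rewrite sin_neg, S2. field. lra.
- intro x. assert (T := sin2_cos2 (m * x)). unfold Rsqr in T.
  set (s := sin (m * x)) in *. set (c := cos (m * x)) in *.
  transitivity (mu * mu * (1 - (s * s + c * c))); [field; lra| rewrite T; ring].
Qed.

Theorem proposition2p1 (a a1 a2 : R -> R)
  (Ha1 : deriv_on_Icc a a1 (- PI) PI)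
  (Ha2 : deriv_on_Icc a1 a2 (- PI) PI)
  (Hc2 : continuous_on_Icc a2 (- PI) PI) :
  (RInt a (- PI) PI = 0 /\
   forall x, - PI <= x <= PI ->
     RInt a (- PI) x * a1 x - (a x) ^ 2
       + / PI * RInt (fun t => (a t) ^ 2) (- PI) PI = 0)
  <->
  ((exists (mu : R) (k : nat), (1 <= k)%nat /\
      forall x, - PI <= x <= PI -> a x = mu * cos (INR k * x))
   \/
   (exists (mu : R) (k : nat),
      forall x, - PI <= x <= PI -> a x = mu * sin ((2 * INR k + 1) / 2 * x))).
Proof.
split.
- apply (forward a a1 a2); auto.
- intros [[mu [k [Hk Hf]]]|[mu [k Hf]]].
  + apply (backward_cos a a1 a2 mu k); auto.
  + apply (backward_sin a a1 a2 mu k); auto.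
Qed.
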